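(* Let $\Gamma_i\in\mathbb{R}^{m\times m}$ with $\|\Gamma_i\|_2\le1$ for all $i\in[n]$, where $\|\cdot\|_2$ is the matrix operator norm. Let $\mathbf{P}\in\mathbb{R}^{nm\times nm}$ have $n^2$ blocks such that the $(i,j)$th block is $\Gamma_i\Gamma_j^\top$ if $i\ne j$, and $I$ otherwise. Then $\mathbf{P}\succeq0$ and $\|\mathbf{P}\|_*\le mn$, where $\|\cdot\|_*$ denotes the nuclear norm. *)

(* Defs.v *)
From HB Require Import structures.
From mathcomp Require Import all_boot all_order all_algebra.
Set Implicit Arguments. Unset Strict Implicit. Unset Printing Implicit Defensive.
Import Order.TTheory GRing.Theory Num.Theory.
Local Open Scope ring_scope.

(* Splitting an index k < n*m into (block index k %/ m, offset k %% m). *)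
Lemma blk_row_proof n m (k : 'I_(n * m)) : (k %/ m < n)%N.
Proof.
case: k => k /=; case: m => [|m]; first by rewrite muln0.
by move=> hk; rewrite ltn_divLR.
Qed.

Lemma blk_col_proof n m (k : 'I_(n * m)) : (k %% m < m)%N.
Proof.
case: k => k /=; case: m => [|m]; first by rewrite muln0.
by move=> _; rewrite ltn_pmod.
Qed.

Definition blk_row n m (k : 'I_(n * m)) : 'I_n := Ordinal (blk_row_proof k).
Definition blk_col n m (k : 'I_(n * m)) : 'I_m := Ordinal (blk_col_proof k).

(* Operator 2-norm at most 1:  ||G x||_2 <= ||x||_2 for all x
   (squared form, x a column vector). *)
Definition opnorm_le1 (R : realFieldType) m (G : 'M[R]_m) : Prop :=
  forall x : 'cV[R]_m, ((G *m x)^T *m (G *m x)) 0 0 <= (x^T *m x) 0 0.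

Definition psd (R : realFieldType) N (A : 'M[R]_N) : Prop :=
  A^T = A /\ forall x : 'cV[R]_N, 0 <= (x^T *m A *m x) 0 0.

Definition orthogonal_mx (R : realFieldType) N (U : 'M[R]_N) : Prop :=
  U^T *m U = 1%:M.

Definition is_svd (R : realFieldType) N (A U V : 'M[R]_N) (d : 'rV[R]_N) : Prop :=
  [/\ orthogonal_mx U, orthogonal_mx V, (forall k, 0 <= d 0 k)
    & A = U *m diag_mx d *m V^T].

(* Nuclear norm of A is at most c: the sum of the singular values of A
   (for any SVD of A) is at most c. *)
Definition nuclear_norm_le (R : realFieldType) N (A : 'M[R]_N) (c : R) : Prop :=
  forall U V d, is_svd A U V d -> \sum_k d 0 k <= c.

Definition Pmat (R : realFieldType) n m (G : 'I_n -> 'M[R]_m) : 'M[R]_(n * m) :=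
  \matrix_(k, l)
    (if blk_row k == blk_row l then (1%:M : 'M[R]_m) (blk_col k) (blk_col l)
     else (G (blk_row k) *m (G (blk_row l))^T) (blk_col k) (blk_col l)).

(* Main.v *)
Require Import Defs.
From HB Require Import structures.
From mathcomp Require Import all_boot all_order all_algebra.
From mathcomp Require Import ring lra.
Import Order.TTheory GRing.Theory Num.Theory.
Local Open Scope ring_scope.

Set Implicit Arguments. Unset Strict Implicit.
Section Aux.
Variable R : rcfType.

Lemma idx_proof n m (i : 'I_n) (c : 'I_m) : (i * m + c < n * m)%N.
Proof.
have hi := ltn_ord i; have hc := ltn_ord c.
apply: (@leq_trans (i.+1 * m)); first by rewrite mulSn addnC ltn_add2r.
by rewrite leq_mul2r hi orbT.
Qed.

Definition idx n m (i : 'I_n) (c : 'I_m) : 'I_(n * m) := Ordinal (idx_proof i c).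

Lemma blk_row_idx n m (i : 'I_n) (c : 'I_m) : blk_row (idx i c) = i.
Proof.
apply: val_inj => /=; have hc := ltn_ord c.
by rewrite divnMDl ?(leq_ltn_trans _ hc) // divn_small // addn0.
Qed.

Lemma blk_col_idx n m (i : 'I_n) (c : 'I_m) : blk_col (idx i c) = c.
Proof.
by apply: val_inj => /=; rewrite modnMDl modn_small.
Qed.

Lemma idx_blk n m (k : 'I_(n * m)) : idx (blk_row k) (blk_col k) = k.
Proof. by apply: val_inj => /=; rewrite -divn_eq. Qed.

Lemma sum_idx n m (F : 'I_(n * m) -> R) :
  \sum_k F k = \sum_(i < n) \sum_(c < m) F (idx i c).
Proof.
rewrite pair_big /=.
rewrite (reindex (fun p : 'I_n * 'I_m => idx p.1 p.2)) //=.
exists (fun k => (blk_row k, blk_col k)) => [[i c] _|k _] /=.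
  by rewrite blk_row_idx blk_col_idx.
by rewrite idx_blk.
Qed.

Lemma psd_tr N (P : 'M[R]_N) (hP : psd P) (A : 'M[R]_N) :
  0 <= \tr (A^T *m P *m A).
Proof.
rewrite /mxtrace; apply: sumr_ge0 => k _.
have := hP.2 (col k A).
suff -> : (A^T *m P *m A) k k = ((col k A)^T *m P *m col k A) 0 0 by [].
rewrite !mxE; apply: eq_bigr => l _; rewrite !mxE; congr (_ * _).
by apply: eq_bigr => j _; rewrite !mxE.
Qed.

Lemma psd_trW N (P : 'M[R]_N) (hP : psd P) (W : 'M[R]_N) :
  W *m W^T = 1%:M -> \tr (P *m W) <= \tr P.
Proof.
move=> hW.
have := psd_tr hP (1%:M - W).
rewrite (raddfB (@trmx _ _ _)) /= trmx1 !mulmxBl !mulmxBr !mul1mx !mulmx1.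
rewrite !(raddfB (@mxtrace _ _)) /=.
have e1 : \tr (W^T *m P) = \tr (P *m W).
  by rewrite -mxtrace_tr trmx_mul trmxK hP.1.
have e2 : \tr (W^T *m P *m W) = \tr P.
  by rewrite mxtrace_mulC mulmxA hW mul1mx.
rewrite e1 e2; lra.
Qed.

Lemma psd_nuclear N (P : 'M[R]_N) (hP : psd P) : nuclear_norm_le P (\tr P).
Proof.
move=> U V d [hU hV _ hA].
have hD : U^T *m P *m V = diag_mx d.
  by rewrite hA !mulmxA hU mul1mx -mulmxA hV mulmx1.
rewrite -mxtrace_diag -hD -mulmxA mxtrace_mulC -mulmxA.
apply: psd_trW => //.
rewrite trmx_mul trmxK mulmxA -(mulmxA V) hU mulmx1.
exact: mulmx1C.
Qed.


Lemma opnorm_sum m (G : 'M[R]_m) (hG : opnorm_le1 G) (z : 'I_m -> R) :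
  \sum_c (\sum_e G c e * z e) ^+ 2 <= \sum_e (z e) ^+ 2.
Proof.
have := hG (\col_e z e).
have -> : ((G *m \col_e z e)^T *m (G *m \col_e z e)) 0 0
   = \sum_c (\sum_e G c e * z e) ^+ 2.
  rewrite mxE; apply: eq_bigr => c _; rewrite !mxE expr2; congr (_ * _);
  by apply: eq_bigr => e _; rewrite !mxE.
have -> : ((\col_e z e)^T *m (\col_e z e)) 0 0 = \sum_e (z e) ^+ 2.
  by rewrite mxE; apply: eq_bigr => c _; rewrite !mxE expr2.
by [].
Qed.

Lemma opT m (G : 'M[R]_m) (hG : opnorm_le1 G) (y : 'I_m -> R) :
  \sum_e (\sum_c y c * G c e) ^+ 2 <= \sum_c (y c) ^+ 2.
Proof.
pose z e := \sum_c y c * G c e.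
pose w c := \sum_e G c e * z e.
have h1 := opnorm_sum hG z.
have h2 : \sum_e (z e) ^+ 2 = \sum_c y c * w c.
  rewrite /w.
  transitivity (\sum_e \sum_c y c * G c e * z e).
    by apply: eq_bigr => e _; rewrite expr2 {1}/z mulr_suml.
  rewrite exchange_big; apply: eq_bigr => c _; rewrite mulr_sumr.
  by apply: eq_bigr => e _; rewrite mulrA.
have h3 : 0 <= \sum_c (y c - w c) ^+ 2 by apply: sumr_ge0 => c _; exact: sqr_ge0.
have h4 : \sum_c (y c - w c) ^+ 2
    = \sum_c (y c) ^+ 2 + \sum_c (w c) ^+ 2 - 2 * \sum_c y c * w c.
  rewrite (eq_bigr (fun c => ((y c) ^+ 2 + (w c) ^+ 2) - 2 * (y c * w c))).
    by rewrite sumrB big_split -mulr_sumr.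
  by move=> c _; ring.
rewrite -/z.
have -> : \sum_e (\sum_c y c * G c e) ^+ 2 = \sum_e (z e) ^+ 2 by [].
move: h1 h2 h3 h4; rewrite -/w.
set A := \sum_c (y c) ^+ 2; set B := \sum_c y c * w c.
set C := \sum_c (w c) ^+ 2; set Z := \sum_e (z e) ^+ 2.
move=> h1 h2 h3 h4; rewrite h4 in h3; lra.
Qed.

Lemma Pmat_sym n m (G : 'I_n -> 'M[R]_m) : (Pmat G)^T = Pmat G.
Proof.
apply/matrixP => k l; rewrite !mxE eq_sym.
case: eqP => _; first by rewrite eq_sym.
by apply: eq_bigr => e _; rewrite !mxE mulrC.
Qed.

Lemma Pmat_idx n m (G : 'I_n -> 'M[R]_m) i c j d :
  Pmat G (idx i c) (idx j d) =
  if i == j then (1%:M : 'M[R]_m) c d else (G i *m (G j)^T) c d.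
Proof. by rewrite mxE !blk_row_idx !blk_col_idx. Qed.

Lemma sum_id m (a : 'I_m -> R) d : \sum_c a c * (1%:M : 'M[R]_m) c d = a d.
Proof.
rewrite (bigD1 d) //= big1 ?addr0; first by rewrite mxE eqxx mulr1.
by move=> c /negPf hc; rewrite mxE hc mulr0.
Qed.

Lemma sum_GG m (a b : 'I_m -> R) (g h : 'M[R]_m) :
  \sum_d (\sum_c a c * (g *m h^T) c d) * b d
  = \sum_e (\sum_c a c * g c e) * (\sum_d b d * h d e).
Proof.
transitivity (\sum_d \sum_c \sum_e a c * g c e * (b d * h d e)).
  apply: eq_bigr => d _; rewrite mulr_suml; apply: eq_bigr => c _.
  rewrite !mxE mulr_sumr mulr_suml; apply: eq_bigr => e _; rewrite !mxE; ring.
rewrite exchange_big /=.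
transitivity (\sum_c \sum_e \sum_d a c * g c e * (b d * h d e)).
  by apply: eq_bigr => c _; rewrite exchange_big.
rewrite exchange_big /=; apply: eq_bigr => e _.
rewrite mulr_suml; apply: eq_bigr => c _; by rewrite mulr_sumr.
Qed.

Lemma Pmat_psd n m (G : 'I_n -> 'M[R]_m) (hG : forall i, opnorm_le1 (G i)) :
  psd (Pmat G).
Proof.
split; first exact: Pmat_sym.
move=> x.
pose X i c := x (idx i c) 0.
pose Y i e := \sum_c X i c * G i c e.
pose A i := \sum_c (X i c) ^+ 2.
pose S i j := \sum_e Y i e * Y j e.
have E0 : (x^T *m Pmat G *m x) 0 0
   = \sum_j \sum_d (\sum_i \sum_c X i c * Pmat G (idx i c) (idx j d)) * X j d.
  rewrite mxE sum_idx; apply: eq_bigr => j _; apply: eq_bigr => d _.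
  rewrite mxE sum_idx; congr (_ * _); apply: eq_bigr => i _.
  by apply: eq_bigr => c _; rewrite !mxE.
have E1 : forall i j,
   \sum_d (\sum_c X i c * Pmat G (idx i c) (idx j d)) * X j d
   = if i == j then A i else S i j.
  move=> i j; under eq_bigr do under eq_bigr do rewrite Pmat_idx.
  case: eqP => [<-|_].
    rewrite /A; apply: eq_bigr => d _; by rewrite sum_id expr2.
  by rewrite sum_GG.
have E2 : (x^T *m Pmat G *m x) 0 0
   = \sum_i \sum_j (if i == j then A i else S i j).
  rewrite E0.
  transitivity (\sum_j \sum_i \sum_d
     (\sum_c X i c * Pmat G (idx i c) (idx j d)) * X j d).
    apply: eq_bigr => j _; rewrite exchange_big; apply: eq_bigr => d _.
    by rewrite mulr_suml.
  rewrite exchange_big; apply: eq_bigr => i _; apply: eq_bigr => j _.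
  by rewrite E1.
have E3 : forall i, \sum_j (if i == j then A i else S i j)
   = (A i - S i i) + \sum_j S i j.
  move=> i; rewrite (bigD1 i) //= eqxx [in RHS](bigD1 i) //=.
  rewrite (eq_bigr (fun j => S i j)); first by ring.
  by move=> j hj; rewrite eq_sym (negPf hj).
have E4 : \sum_i \sum_j S i j = \sum_e (\sum_i Y i e) ^+ 2.
  transitivity (\sum_i \sum_e \sum_j Y i e * Y j e).
    by apply: eq_bigr => i _; rewrite exchange_big.
  rewrite exchange_big; apply: eq_bigr => e _.
  rewrite expr2 mulr_suml; apply: eq_bigr => i _; by rewrite mulr_sumr.
rewrite E2 (eq_bigr _ (fun i _ => E3 i)) big_split /= E4.
apply: addr_ge0; last by apply: sumr_ge0 => e _; exact: sqr_ge0.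
apply: sumr_ge0 => i _; rewrite subr_ge0 /A /S.
have -> : \sum_e Y i e * Y i e = \sum_e (\sum_c X i c * G i c e) ^+ 2.
  by apply: eq_bigr => e _; rewrite expr2.
exact: opT.
Qed.

End Aux.

Theorem lemma18 (R : rcfType) (n m : nat) (G : 'I_n -> 'M[R]_m)
  (hG : forall i, opnorm_le1 (G i)) :
  psd (Pmat G) /\ nuclear_norm_le (Pmat G) (m * n)%:R.
Proof.
have hP := Pmat_psd hG.
split => //.
have -> : (m * n)%:R = \tr (Pmat G) :> R.
  rewrite /mxtrace (eq_bigr (fun _ => 1)); last first.
    by move=> k _; rewrite mxE eqxx mxE eqxx.
  by rewrite sumr_const card_ord mulnC.
exact: psd_nuclear.
Qed.
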